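(* Consider the knapsack auction game described in the context, with the Greedy allocation rule. In the uniform-price (UP) auction, bidding truthfully (submitting $B_i = v_i$, i.e. per-unit bid $b_i = v_i/k_i$) is a weakly dominant strategy for every bidder $i$, so the UP auction is dominant-strategy incentive compatible. Moreover, the UP payment rule is the unique payment rule which, combined with the Greedy allocation rule, yields a dominant-strategy incentive-compatible sealed-bid mechanism (under the normalization that a bidder who bids $0$ pays $0$). That is, the UP auction has the unique dominant-strategy incentive-compatible equilibrium of the knapsack auction game.
   Context: A seller owns a knapsack of capacity $K>0$ and sells its space to bidders $N=\{1,\dots,n\}$. Bidder $i$ owns an indivisible object of size $k_i<K$; sizes are public and $\sum_{i\in N}k_i>K$. Bidder $i$ obtains value $v_i$ if its object is packed and $0$ otherwise; $v_i$ is privately known to $i$, and values are drawn from a commonly known continuous, twice differentiable distribution $F$ with density $f<\infty$. Each bidder $i$ submits a bid $B_i$ for its object; its per-unit bid is $b_i=B_i/k_i$. Per-unit bids are assumed distinct and bidders are indexed so that $b_1>b_2>\dots>b_n$. Greedy allocation rule: objects are packed in decreasing order of per-unit bid, starting from the highest, and the auctioneer stops as soon as the next object in this order does not fit in the remaining capacity (no further, lower-ranked objects are considered). Thus the winning set is $W=\{1,\dots,m\}$ with $\sum_{j\in W}k_j\le K$ and $\sum_{j\in W}k_j+k_{m+1}>K$. UP payment rule: every packed bidder $i$ pays $k_i b_{m+1}$, where $b_{m+1}$ is the per-unit bid of the first bidder in the ranking whose object is not packed; unpacked bidders pay nothing. Bidder $i$'s payoff is $v_i$ minus its payment if packed, and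 $0$ otherwise. A mechanism (allocation rule, payment rule) is dominant-strategy incentive compatible (DSIC) if truthful bidding is a weakly dominant strategy for every bidder. *)

(* Defs.v *)
From HB Require Import structures.
From mathcomp Require Import all_boot all_order all_algebra.
Set Implicit Arguments. Unset Strict Implicit. Unset Printing Implicit Defensive.
Import Order.TTheory GRing.Theory Num.Theory.
Local Open Scope ring_scope.

Section Knapsack.
Variables (R : realFieldType) (n : nat) (k : 'I_n -> R) (K : R).

Definition unit_bid (B : 'I_n -> R) (i : 'I_n) : R := B i / k i.

(* ranking: i is ranked (weakly) before j if its per-unit bid is larger;
   ties (excluded in the paper) are broken in favour of the smaller index. *)
Definition rank_le (B : 'I_n -> R) : rel 'I_n :=
  fun i j => (unit_bid B j < unit_bid B i) ||
             ((unit_bid B i == unit_bid B j) && (i <= j)%N).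

Definition ranking (B : 'I_n -> R) : seq 'I_n := sort (rank_le B) (enum 'I_n).

Fixpoint greedy (cap : R) (s : seq 'I_n) : seq 'I_n :=
  match s with
  | [::] => [::]
  | i :: s' => if k i <= cap then i :: greedy (cap - k i) s' else [::]
  end.

Definition winners (B : 'I_n -> R) : seq 'I_n := greedy K (ranking B).

(* the first bidder in the ranking whose object is not packed (bidder m+1) *)
Definition blocker (B : 'I_n -> R) : option 'I_n :=
  ohead (drop (size (winners B)) (ranking B)).

Definition payment_rule := ('I_n -> R) -> 'I_n -> R.

Definition up_pay : payment_rule := fun B i =>
  if i \in winners B then
    match blocker B with Some j => k i * unit_bid B j | None => 0 end
  else 0.

Definition upd (B : 'I_n -> R) (i : 'I_n) (x : R) : 'I_n -> R :=
  fun j => if j == i then x else B j.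

Definition payoff (p : payment_rule) (B : 'I_n -> R) (i : 'I_n) (v : R) : R :=
  (if i \in winners B then v else 0) - p B i.

Definition DSIC (p : payment_rule) : Prop :=
  forall (B : 'I_n -> R) (i : 'I_n) (v x : R),
    (forall j, 0 <= B j) -> 0 <= v -> 0 <= x ->
    payoff p (upd B i x) i v <= payoff p (upd B i v) i v.

End Knapsack.

(* Main.v *)
Require Import Defs.
From HB Require Import structures.
From mathcomp Require Import all_boot all_order all_algebra.
From mathcomp Require Import lra.
From Stdlib Require Import FunctionalExtensionality.
Import Order.TTheory GRing.Theory Num.Theory.
Local Open Scope ring_scope.
Set Implicit Arguments. Unset Strict Implicit. Unset Printing Implicit Defensive.

Section Ord.
Variables (R : realFieldType) (n : nat) (k : 'I_n -> R) (B : 'I_n -> R).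
Local Notation r := (rank_le k B).
Local Notation b := (unit_bid k B).

Lemma r_refl i : r i i.
Proof. by rewrite /rank_le eqxx leqnn orbT. Qed.

Lemma r_total : total r.
Proof.
move=> i j; rewrite /rank_le.
case: (ltgtP (b i) (b j)) => [h|h|h]; rewrite ?orbT //=.
by rewrite leq_total.
Qed.

Lemma r_trans : transitive r.
Proof.
move=> j i l; rewrite /rank_le.
case/orP=> [h1|/andP[/eqP h1 h1']]; case/orP=> [h2|/andP[/eqP h2 h2']].
- by rewrite (lt_trans h2 h1).
- by rewrite -h2 h1.
- by rewrite h1 h2.
- by rewrite h1 h2 eqxx (leq_trans h1' h2') orbT.
Qed.

Lemma r_anti i j : r i j -> r j i -> i = j.
Proof.
rewrite /rank_le.
case/orP=> [h1|/andP[/eqP h1 h1']]; case/orP=> [h2|/andP[/eqP h2 h2']].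
- by move: (lt_trans h1 h2); rewrite ltxx.
- by move: h1; rewrite h2 ltxx.
- by move: h2; rewrite h1 ltxx.
- by apply/val_inj/eqP; rewrite eqn_leq h1' h2'.
Qed.

Lemma r_le i j : r i j -> b j <= b i.
Proof.
rewrite /rank_le; case/orP=> [h|/andP[/eqP h _]]; [exact: ltW | by rewrite h].
Qed.

Lemma r_lt i j : b j < b i -> r i j.
Proof. by rewrite /rank_le => ->. Qed.

Lemma r_neg i j : ~~ r i j -> r j i.
Proof. by have := r_total i j; case: (r i j). Qed.

End Ord.
Section Greedy.
Variables (R : realFieldType) (n : nat) (k : 'I_n -> R).
Hypothesis kpos : forall i, 0 < k i.
Variable r : rel 'I_n.
Hypothesis rtr : transitive r.
Hypothesis ranti : forall i j, r i j -> r j i -> i = j.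
Hypothesis rrefl : reflexive r.

Lemma sum_ge0 (P : pred 'I_n) (s : seq 'I_n) : 0 <= \sum_(l <- s | P l) k l.
Proof. by apply: sumr_ge0 => l _; exact: ltW. Qed.

Lemma greedy_mem s cap j : sorted r s -> uniq s ->
  (j \in greedy k cap s) = (j \in s) && (\sum_(l <- s | r l j) k l <= cap).
Proof.
elim: s cap => [|a s IH] cap //= Hs /andP[as' us].
have Ha := order_path_min rtr Hs.
have Hs' := path_sorted Hs.
rewrite big_cons in_cons.
have [->|ja] := eqVneq j a.
  rewrite rrefl /=.
  rewrite (@big1_seq _ _ _ _ s) ?addr0; last first.
    move=> l /andP[rla ls]; have ral := allP Ha l ls.
    by move: as'; rewrite -(ranti rla ral) ls.
  by case: ifP => h; rewrite ?in_cons ?eqxx.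
rewrite /=.
case: (boolP (j \in s)) => js /=; last first.
  by case: ifP => // _; rewrite in_cons (negbTE ja) IH // (negbTE js).
rewrite (allP Ha j js).
case: ifP => h.
  by rewrite in_cons (negbTE ja) IH // js /= lerBrDl.
apply/esym/negbTE; rewrite -ltNge.
have := sum_ge0 (r^~ j) s; move: h => /negbT; rewrite -ltNge => h.
lra.
Qed.

Lemma greedy_prefix s cap : greedy k cap s = take (size (greedy k cap s)) s.
Proof.
elim: s cap => [|a s IH] cap //=.
by case: ifP => //= _; rewrite -IH.
Qed.

End Greedy.
Section Auction.
Variables (R : realFieldType) (n : nat) (k : 'I_n -> R) (K : R).
Hypothesis kpos : forall i, 0 < k i.
Hypothesis Kpos : 0 < K.
Hypothesis Ksum : K < \sum_(i < n) k i.

Local Notation W B := (winners k K B).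
Local Notation r B := (rank_le k B).
Local Notation ub B := (unit_bid k B).

Lemma win_char B (j : 'I_n) : (j \in W B) = (\sum_(l | r B l j) k l <= K).
Proof.
rewrite /winners /ranking (@greedy_mem _ _ _ kpos (r B)) //; last first.
- by rewrite sort_uniq enum_uniq.
- exact: (sort_sorted (@r_total _ _ k B)).
- exact: r_refl.
- exact: r_anti.
- exact: r_trans.
rewrite mem_sort mem_enum /=.
by rewrite (perm_big _ (permEl (perm_sort _ _))) big_enum_cond.
Qed.

Lemma seq_max (T : eqType) (rr : rel T) : total rr -> transitive rr ->
  forall s : seq T, s != [::] -> exists2 m, m \in s & forall l, l \in s -> rr l m.
Proof.
move=> tot tr; elim=> [//|a s IH] _.
case: s IH => [|a' s] IH.
  exists a; first by rewrite mem_head.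
  move=> l; rewrite mem_seq1 => /eqP ->; by have := tot a a; rewrite orbb.
have [m ms Hm] := IH isT.
case: (boolP (rr a m)) => ham.
  exists m; first by rewrite in_cons ms orbT.
  by move=> l; rewrite in_cons => /orP[/eqP->|]; [|exact: Hm].
have hma : rr m a by have := tot a m; rewrite (negbTE ham).
exists a; first exact: mem_head.
move=> l; rewrite in_cons => /orP[/eqP->|ls].
  by have := tot a a; rewrite orbb.
exact: tr (Hm l ls) hma.
Qed.

Lemma pred_max B (S : pred 'I_n) : (exists l, S l) ->
  exists m, S m /\ forall l, S l -> r B l m.
Proof.
move=> [l0 Sl0].
have ne : [seq l <- enum 'I_n | S l] != [::].
  apply/eqP=> h.
  have : l0 \in [seq l <- enum 'I_n | S l] by rewrite mem_filter Sl0 mem_enum.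
  by rewrite h.
have [m ms Hm] := seq_max (@r_total _ _ k B) (@r_trans _ _ k B) ne.
move: ms; rewrite mem_filter => /andP[Sm _].
exists m; split => // l Sl; apply: Hm; by rewrite mem_filter Sl mem_enum.
Qed.

Lemma sum_mono (P Q : pred 'I_n) : (forall l, P l -> Q l) ->
  \sum_(l | P l) k l <= \sum_(l | Q l) k l.
Proof.
move=> PQ; rewrite [X in X <= _]big_mkcond [X in _ <= X]big_mkcond.
apply: ler_sum => l _; case: (boolP (P l)) => Pl; first by rewrite (PQ _ Pl).
by case: (Q l) => //; exact: ltW.
Qed.

Lemma loser_exists B (S : pred 'I_n) : K < \sum_(l | S l) k l ->
  exists j, S j /\ j \notin W B.
Proof.
move=> hS.
case: (pickP S) => [l0 Sl0|none]; last first.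
  by move: hS; rewrite big_pred0 // => h; move: (lt_trans Kpos h); rewrite ltxx.
have [m [Sm Hm]] := pred_max B (ex_intro _ l0 Sl0).
exists m; split => //; rewrite win_char -ltNge.
apply: (lt_le_trans hS); apply: sum_mono => l; exact: Hm.
Qed.

Lemma sum_winners B : \sum_(l | l \in W B) k l <= K.
Proof.
case: (pickP (fun l => l \in W B)) => [l0 Sl0|none]; last first.
  by rewrite big_pred0 //; exact: ltW.
have [m [Sm Hm]] := pred_max B (ex_intro _ l0 Sl0).
have hm : \sum_(l | r B l m) k l <= K by rewrite -win_char.
apply: le_trans hm.
apply: sum_mono => l; exact: Hm.
Qed.

Lemma blocker_spec B : exists d, [/\ blocker k K B = Some d, d \notin W B &
  forall j, j \notin W B -> r B d j].
Proof.
have [j0 [_ j0W]] := @loser_exists B predT Ksum.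
have EW : W B = take (size (W B)) (ranking k B) := greedy_prefix _ _ _.
have Es := cat_take_drop (size (W B)) (ranking k B); rewrite -EW in Es.
have us : uniq (ranking k B) by rewrite sort_uniq enum_uniq.
have ss : sorted (r B) (ranking k B) := sort_sorted (@r_total _ _ k B) _.
have allin : forall j, j \in ranking k B by move=> j; rewrite mem_sort mem_enum.
rewrite /blocker.
case E: (drop (size (W B)) (ranking k B)) => [|d rest].
  have : j0 \in W B ++ drop (size (W B)) (ranking k B) by rewrite Es allin.
  by rewrite E cats0 (negbTE j0W).
exists d; rewrite /=; split => //.
  move: us; rewrite -Es E cat_uniq => /and3P[_ h _].
  by apply: contra h => dW; apply/hasP; exists d; rewrite ?mem_head.
move=> j jW.
have : j \in d :: rest.
  by move: (allin j); rewrite -Es E mem_cat (negbTE jW).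
rewrite in_cons => /orP[/eqP->|jr]; first exact: r_refl.
have := drop_sorted (size (W B)) ss; rewrite E /= => hp.
exact: (allP (order_path_min (@r_trans _ _ k B) hp)).
Qed.


Lemma ub_ne B i x l : l != i -> ub (upd B i x) l = ub B l.
Proof. by move=> h; rewrite /unit_bid /upd (negbTE h). Qed.

Lemma ub_eq B i x : ub (upd B i x) i = x / k i.
Proof. by rewrite /unit_bid /upd eqxx. Qed.

Lemma r_ne B i x y l j : l != i -> j != i ->
  r (upd B i x) l j = r (upd B i y) l j.
Proof. by move=> hl hj; rewrite /rank_le !ub_ne. Qed.

Lemma winner_before_loser B i j : i \in W B -> j \notin W B -> r B i j.
Proof.
move=> iW jW; apply: r_neg; apply: contra jW => rji.
rewrite win_char; move: iW; rewrite win_char; apply: le_trans.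
apply: sum_mono => l rl; exact: r_trans rl rji.
Qed.

Lemma win_transfer B i x v j : j != i ->
  i \in W (upd B i x) -> i \in W (upd B i v) ->
  j \in W (upd B i x) -> j \in W (upd B i v).
Proof.
move=> ji ix iv jx.
case: (boolP (r (upd B i v) j i)) => hji.
  rewrite win_char; move: iv; rewrite win_char; apply: le_trans.
  apply: sum_mono => l rl; exact: r_trans rl hji.
have hij := r_neg hji.
case: (boolP (r (upd B i x) i j)) => hij'.
  rewrite win_char; move: jx; rewrite win_char; apply: le_trans.
  apply: sum_mono => l; have [->|li] := eqVneq l i; first by [].
  by rewrite (r_ne _ _ x li ji).
have hji' := r_neg hij'.
rewrite win_char; move: ix; rewrite win_char; apply: le_trans.
apply: sum_mono => l; have [->|li] := eqVneq l i; first by rewrite r_refl.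
rewrite (r_ne _ v x li ji) => rl; exact: r_trans rl hji'.
Qed.

Lemma win_mono B i y z : y <= z -> i \in W (upd B i y) -> i \in W (upd B i z).
Proof.
move=> yz; rewrite !win_char; apply: le_trans; apply: sum_mono => l.
have [->|li] := eqVneq l i; first by rewrite !r_refl.
have hyz : y / k i <= z / k i by rewrite ler_pM2r // invr_gt0.
move=> rl.
have := r_le rl; rewrite ub_eq ub_ne // => hz.
case: (ltP (y / k i) (z / k i)) => h.
  by apply: r_lt; rewrite ub_eq ub_ne //; exact: lt_le_trans h hz.
have e : y / k i = z / k i by apply/eqP; rewrite eq_le hyz h.
by move: rl; rewrite /rank_le !ub_eq !ub_ne // e.
Qed.


Lemma up_dsic : DSIC k K (up_pay k K).
Proof.
move=> B i v x _ v0 x0.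
rewrite /payoff /up_pay.
have [dx [bx dxW hdx]] := blocker_spec (upd B i x).
have [dv [bv dvW hdv]] := blocker_spec (upd B i v).
rewrite bx bv.
have hk := kpos i.
case: (boolP (i \in W (upd B i x))) => wx;
  case: (boolP (i \in W (upd B i v))) => wv.
- have dxi : dx != i by apply: contraNneq dxW => ->.
  have dvi : dv != i by apply: contraNneq dvW => ->.
  have dvx : dv \notin W (upd B i x).
    by apply: contra dvW; apply: win_transfer.
  have := r_le (hdx _ dvx); rewrite !ub_ne // => h.
  nra.
- have hS : K < \sum_(l | r (upd B i v) l i) k l.
    by move: wv; rewrite win_char -ltNge.
  have [j [rji jW]] := loser_exists (upd B i x) hS.
  have ji : j != i by apply: contraNneq jW => ->.
  have dxi : dx != i by apply: contraNneq dxW => ->.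
  have h1 := r_le (hdx _ jW); have h2 := r_le rji.
  rewrite ub_eq ub_ne // in h2; rewrite !ub_ne // in h1; rewrite ub_ne //.
  have h3 := le_trans h2 h1; rewrite ler_pdivrMr // in h3.
  nra.
- have dvi : dv != i by apply: contraNneq dvW => ->.
  have h := r_le (winner_before_loser wv dvW).
  rewrite ub_eq ub_ne // ler_pdivlMr // in h; rewrite ub_ne //.
  nra.
- by rewrite subrr.
Qed.


Local Notation ww B i y := (i \in winners k K (upd B i y)).
Local Notation qq p B i y := (p (upd B i y) i).

Lemma up_unique (p : payment_rule R n) : DSIC k K p ->
  (forall (B : 'I_n -> R) (i : 'I_n),
        (forall j, 0 <= B j) -> B i = 0 -> p B i = 0) ->
  forall (B : 'I_n -> R), (forall j, 0 <= B j) ->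
  forall i, p B i = up_pay k K B i.
Proof.
move=> Dp N B B0 i.
have E : upd B i (B i) = B.
  by apply: functional_extensionality => j; rewrite /upd; case: eqP => // ->.
suff: qq p B i (B i) = up_pay k K (upd B i (B i)) i by rewrite E.
have v0 : 0 <= B i := B0 i.
move: v0; set v := B i => v0.
have D : forall a c, 0 <= a -> 0 <= c ->
  (if ww B i c then a else 0) - qq p B i c <= (if ww B i a then a else 0) - qq p B i a.
  by move=> a c a0 c0; exact: (Dp B i a c B0 a0 c0).
have q0 : qq p B i 0 = 0.
  by apply: N; [move=> j; rewrite /upd; case: eqP | rewrite /upd eqxx].
have Wc : forall a c, 0 <= a -> 0 <= c -> ww B i a -> ww B i c ->
    qq p B i a = qq p B i c.
  move=> a c a0 c0 wa wc; have := D a c a0 c0; have := D c a c0 a0.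
  rewrite wa wc => h1 h2; lra.
have Lc : forall a c, 0 <= a -> 0 <= c -> ~~ ww B i a -> ~~ ww B i c ->
    qq p B i a = qq p B i c.
  move=> a c a0 c0 wa wc; have := D a c a0 c0; have := D c a c0 a0.
  rewrite (negbTE wa) (negbTE wc) => h1 h2; lra.
have hk := kpos i.
rewrite /up_pay.
case: (boolP (ww B i v)) => wv; last first.
  have w0 : ~~ ww B i 0.
    by apply: contra wv; apply: win_mono.
  by rewrite (Lc v 0) // lexx.
have [d [bd dW hd]] := blocker_spec (upd B i v).
rewrite bd.
have di : d != i by apply: contraNneq dW => ->.
rewrite ub_ne //.
have c0 : 0 <= ub B d by apply: divr_ge0; [exact: B0 | exact: ltW].
have lose : forall y, y < k i * ub B d -> ~~ ww B i y.
  move=> y hy; rewrite win_char -ltNge.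
  have hd' : K < \sum_(l | r (upd B i v) l d) k l.
    by move: dW; rewrite win_char -ltNge.
  apply: (lt_le_trans hd'); apply: sum_mono => l.
  have [->|li] := eqVneq l i; first by rewrite r_refl.
  rewrite (r_ne _ v y li di) => rl; apply: r_trans rl _; apply: r_lt.
  rewrite ub_eq ub_ne // ltr_pdivrMr //; rewrite mulrC //.
have win : forall y, k i * ub B d < y -> ww B i y.
  move=> y hy; rewrite win_char; apply: le_trans (sum_winners (upd B i v)).
  apply: sum_mono => l; have [->|li] := eqVneq l i; first by [].
  move=> rl; have := r_le rl; rewrite ub_eq ub_ne // => h.
  apply: contraT => lW; have := r_le (hd _ lW); rewrite !ub_ne // => h'.
  have := le_trans h h'; rewrite ler_pdivrMr // => h''.
  by move: hy; rewrite mulrC ltNge h''.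
case: (boolP (ww B i 0)) => w0.
  rewrite (Wc v 0) // q0.
  have t0 : 0 <= k i * ub B d by apply: mulr_ge0 => //; exact: ltW.
  case: (ltP 0 (k i * ub B d)) => ht; last by apply/eqP; rewrite eq_le t0 ht.
  by move: (lose 0 ht); rewrite w0.
have Qge : 0 <= qq p B i v.
  have := D 0 v (lexx 0) v0; rewrite wv (negbTE w0) q0; lra.
have t0 : 0 <= k i * ub B d by apply: mulr_ge0 => //; exact: ltW.
apply/eqP; rewrite eq_le; apply/andP; split.
  rewrite leNgt; apply/negP => hQ.
  set y := (k i * ub B d + qq p B i v) / 2.
  have ty : k i * ub B d < y by rewrite /y; lra.
  have y0 : 0 <= y by rewrite /y; lra.
  have wy := win y ty.
  have := D y 0 y0 (lexx 0); rewrite wy (negbTE w0) q0 (Wc y v) //.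
  rewrite /y; lra.
rewrite leNgt; apply/negP => hQ.
set y := (k i * ub B d + qq p B i v) / 2.
have ty : y < k i * ub B d by rewrite /y; lra.
have y0 : 0 <= y by rewrite /y; lra.
have wy := lose y ty.
have := D y v y0 v0; rewrite wv (negbTE wy) (Lc y 0) // q0.
rewrite /y; lra.
Qed.

End Auction.

Theorem proposition1 (R : realFieldType) (n : nat) (k : 'I_n -> R) (K : R) :
  0 < K ->
  (forall i, 0 < k i) ->
  (forall i, k i < K) ->
  K < \sum_(i < n) k i ->
  DSIC k K (up_pay k K) /\
  (forall p : @payment_rule R n,
     DSIC k K p ->
     (forall (B : 'I_n -> R) (i : 'I_n),
        (forall j, 0 <= B j) -> B i = 0 -> p B i = 0) ->
     forall (B : 'I_n -> R), (forall j, 0 <= B j) ->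
     forall i, p B i = up_pay k K B i).
Proof.
move=> Kpos kpos _ Ksum; split.
  exact: up_dsic.
move=> p Dp N B B0 i; exact: (up_unique kpos Kpos Ksum Dp N B0).
Qed.
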